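(* Assume that for every $x\in V$ the functions $s\mapsto H(x,s)$ and $s\mapsto f_l(x,s)$ ($l=1,\dots,m$) are nondecreasing. If $(u^1,\dots,u^m)$ and $(v^1,\dots,v^m)$ both solve the discrete system (S), then for every $l=1,\dots,m$, $$\{x\in V: u^l(x)>v^l(x)\}\subset\{x\in V:\hat{u}^l(x)>\hat{v}^l(x)\}\subset\{x\in V: u^l(x)\ge v^l(x)\}.$$
   Context: Let $G=(V,E)$ be a finite, connected, undirected graph with at least two vertices. For $x,y\in V$, $d(x,y)$ denotes the graph (shortest-path) distance, and $\deg(x)=|\{y\in V:(x,y)\in E\}|$. The boundary of $G$ is $$\partial G=\Big\{x\in V:\ \exists\, y\in V \text{ with } \tfrac{1}{\deg(x)}\textstyle\sum_{(x,z)\in E} d(z,y)<d(x,y)\Big\},$$ and the interior is $G^o=V\setminus\partial G$. For $r:V\to\mathbb{R}$, the mean value at $x$ is $\overline{r}(x)=\frac{1}{\deg(x)}\sum_{(x,y)\in E} r(y)$. Fix an integer $m\ge1$. Let $H:V\times[0,\infty)\to\mathbb{R}$ and $f_l:V\times[0,\infty)\to\mathbb{R}$ ($l=1,\dots,m$) be continuous in the second variable with $H(x,0)=0$ and $f_l(x,0)=0$ for all $x\in V$; they are extended to negative arguments by $H(x,s)=-H(x,-s)$ and $f_l(x,s)=-f_l(x,-s)$ for $s<0$. Let $\phi^l:\partial G\to[0,\infty)$ ($l=1,\dots,m$) be boundary data satisfying $\phi^i(x)\phi^j(x)=0$ for all $x\in\partial G$ and $i\neq j$. The discrete system (S) for $(u^1,\dots,u^m)$,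 $u^l:V\to\mathbb{R}$, is: for every $l=1,\dots,m$, $$u^l(x)=\max\Big(H\Big(x,\ \overline{u}^l(x)-\sum_{p\neq l}\overline{u}^p(x)\Big)-f_l\big(x,u^l(x)\big),\ 0\Big)\quad (x\in G^o),\qquad u^l(x)=\phi^l(x)\quad (x\in\partial G).$$ For a vector $(u^1,\dots,u^m)$ we write $\hat{u}^l(x)=u^l(x)-\sum_{p\neq l}u^p(x)$, and similarly $\hat{v}^l$. *)

(* Defs.v *)
From HB Require Import structures.
From mathcomp Require Import all_boot all_order all_algebra.
From mathcomp Require Import all_classical all_reals all_analysis.
Set Implicit Arguments. Unset Strict Implicit. Unset Printing Implicit Defensive.
Import Order.TTheory GRing.Theory Num.Theory.
Local Open Scope ring_scope.

Definition simple_graph (V : finType) (e : rel V) : Prop :=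
  symmetric e /\ irreflexive e.

Definition nbhd (V : finType) (e : rel V) (x : V) : {set V} := [set y | e x y].
Definition deg (V : finType) (e : rel V) (x : V) : nat := #|nbhd e x|.

Fixpoint ball (V : finType) (e : rel V) (n : nat) (x : V) : {set V} :=
  match n with
  | 0 => [set x]
  | k.+1 => ball e k x :|: [set y | [exists z in ball e k x, e z y]]
  end.

Definition connected_graph (V : finType) (e : rel V) : Prop :=
  forall x y : V, exists n, y \in ball e n x.

(* Shortest path distance: least n with y in ball n x (searched among n < #|V|,
   which suffices for a connected graph). *)
Definition gdist (V : finType) (e : rel V) (x y : V) : nat :=
  find (fun n => y \in ball e n x) (iota 0 #|V|).

Definition meanv (R : realType) (V : finType) (e : rel V) (r : V -> R) (x : V) : R :=
  (\sum_(y in nbhd e x) r y) / (deg e x)%:R.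

Definition boundary (R : realType) (V : finType) (e : rel V) : {set V} :=
  [set x | [exists y, @meanv R V e (fun z => ((gdist e z y)%:R : R)) x < (gdist e x y)%:R]].

Definition solves_S (R : realType) (V : finType) (e : rel V) (m : nat)
  (H : V -> R -> R) (f : 'I_m -> V -> R -> R) (phi : 'I_m -> V -> R)
  (u : 'I_m -> V -> R) : Prop :=
  forall l : 'I_m, forall x : V,
    (x \notin boundary R e ->
       u l x = Num.max (H x (meanv e (u l) x - \sum_(p < m | p != l) meanv e (u p) x)
                        - f l x (u l x)) 0)
    /\ (x \in boundary R e -> u l x = phi l x).

Definition uhat (R : realType) (V : finType) (m : nat) (u : 'I_m -> V -> R)
  (l : 'I_m) (x : V) : R := u l x - \sum_(p < m | p != l) u p x.

(* Main.v *)
Require Import Defs.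
From HB Require Import structures.
From mathcomp Require Import all_boot all_order all_algebra.
From mathcomp Require Import all_classical all_reals all_analysis.
Import Order.TTheory GRing.Theory Num.Theory.
Import numFieldNormedType.Exports.
Local Open Scope classical_set_scope.
Local Open Scope ring_scope.


Section Helpers.
Variables (R : realType) (V : finType) (e : rel V) (m : nat)
  (H : V -> R -> R) (f : 'I_m -> V -> R -> R) (phi : 'I_m -> V -> R).

Lemma meanv_ge0 (r : V -> R) x : (forall y, 0 <= r y) -> 0 <= meanv e r x.
Proof. move=> hr; rewrite /meanv; apply: divr_ge0; last exact: ler0n.
by apply: sumr_ge0 => y _. Qed.

Lemma sum_ge_one (g : 'I_m -> R) p l : l != p -> (forall q, 0 <= g q) ->
  g l <= \sum_(q < m | q != p) g q.
Proof. move=> hlp hg; rewrite (bigD1 l) //= lerDl; by apply: sumr_ge0. Qed.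

Lemma sol_ge0 u : (forall l x, x \in boundary R e -> 0 <= phi l x) ->
  solves_S e H f phi u -> forall l x, 0 <= u l x.
Proof.
move=> hphi hS l x; have [h1 h2] := hS l x.
case: (boolP (x \in boundary R e)) => hb; first by rewrite h2 // hphi.
by rewrite h1 // le_max lexx orbT.
Qed.

Lemma sol_disj u :
  (forall x, H x 0 = 0) -> (forall l x, f l x 0 = 0) ->
  (forall x s, s < 0 -> H x s = - H x (- s)) ->
  (forall l x, x \in boundary R e -> 0 <= phi l x) ->
  (forall i j x, i != j -> x \in boundary R e -> phi i x * phi j x = 0) ->
  (forall x s t, 0 <= s -> s <= t -> H x s <= H x t) ->
  (forall l x s t, 0 <= s -> s <= t -> f l x s <= f l x t) ->
  solves_S e H f phi u ->
  forall l p x, p != l -> 0 < u l x -> u p x = 0.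
Proof.
move=> H0 f0 Hodd hphi hdisj Hmon fmon hS l p x hpl hul.
have hge := @sol_ge0 u hphi hS.
have Hnpos : forall s, s <= 0 -> H x s <= 0.
  move=> s; rewrite le_eqVlt => /orP [/eqP -> | hs]; first by rewrite H0.
  rewrite Hodd // oppr_le0 -(H0 x); apply: Hmon => //.
  by rewrite oppr_ge0 ltW.
have hlp : l != p by rewrite eq_sym.
have [h1l h2l] := hS l x; have [h1p h2p] := hS p x.
case: (boolP (x \in boundary R e)) => hb.
  have := hdisj l p x hlp hb.
  rewrite -(h2l hb) -(h2p hb); move/eqP; rewrite mulf_eq0 => /orP [/eqP E|/eqP //].
  by move: hul; rewrite E ltxx.
have hul' := hul; rewrite (h1l hb) lt_max ltxx orbF subr_gt0 in hul'.
have f0l : 0 <= f l x (u l x) by rewrite -(f0 l x); apply: fmon.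
set A := fun q => meanv e (u q) x.
have hA : forall q, 0 <= A q by move=> q; apply: meanv_ge0 => y; apply: hge.
have hal : 0 < A l - \sum_(q < m | q != l) A q.
  rewrite ltNge; apply/negP => hle.
  have := Hnpos _ hle; rewrite /A => hH.
  by move: (lt_le_trans (le_lt_trans f0l hul') hH); rewrite ltxx.
have hap : A p - \sum_(q < m | q != p) A q <= 0.
  have h1 := @sum_ge_one A l p hpl hA.
  have h2 := @sum_ge_one A p l hlp hA.
  rewrite subr_gt0 in hal. rewrite subr_le0.
  apply: (le_trans (ltW (le_lt_trans h1 hal)) h2).
have f0p : 0 <= f p x (u p x) by rewrite -(f0 p x); apply: fmon; last exact: hge.
rewrite (h1p hb) max_r //.
rewrite subr_le0; apply: le_trans f0p; exact: Hnpos.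
Qed.
End Helpers.
Arguments sol_ge0 {R V e m H f phi u}.
Arguments sol_disj {R V e m H f phi u}.

Theorem mainTheorem4 (R : realType) (V : finType) (e : rel V) (m : nat)
  (H : V -> R -> R) (f : 'I_m -> V -> R -> R) (phi : 'I_m -> V -> R)
  (u v : 'I_m -> V -> R) :
  simple_graph e -> connected_graph e -> (1 < #|V|)%N ->
  (0 < m)%N ->
  (* continuity in the second variable on [0, oo) *)
  (forall x, {within [set s : R | 0 <= s]%classic, continuous (H x)}) ->
  (forall l x, {within [set s : R | 0 <= s]%classic, continuous (f l x)}) ->
  (forall x, H x 0 = 0) -> (forall l x, f l x 0 = 0) ->
  (* odd extension to negative arguments *)
  (forall x s, s < 0 -> H x s = - H x (- s)) ->
  (forall l x s, s < 0 -> f l x s = - f l x (- s)) ->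
  (* boundary data *)
  (forall l x, x \in boundary R e -> 0 <= phi l x) ->
  (forall i j x, i != j -> x \in boundary R e -> phi i x * phi j x = 0) ->
  (* monotonicity on [0, oo) (equivalently on R, by oddness) *)
  (forall x s t, 0 <= s -> s <= t -> H x s <= H x t) ->
  (forall l x s t, 0 <= s -> s <= t -> f l x s <= f l x t) ->
  solves_S e H f phi u -> solves_S e H f phi v ->
  forall l : 'I_m,
    ([set x | v l x < u l x] \subset [set x | uhat v l x < uhat u l x])%SET /\
    ([set x | uhat v l x < uhat u l x] \subset [set x | v l x <= u l x])%SET.
Proof.
move=> _ _ _ _ _ _ H0 f0 Hodd _ hphi hdisj Hmon fmon hu hv l.
have gu := sol_ge0 hphi hu; have gv := sol_ge0 hphi hv.
have du := sol_disj H0 f0 Hodd hphi hdisj Hmon fmon hu.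
have dv := sol_disj H0 f0 Hodd hphi hdisj Hmon fmon hv.
have hle : forall w : 'I_m -> V -> R, (forall l x, 0 <= w l x) -> forall x, uhat w l x <= w l x.
  move=> w gw x; rewrite /uhat; apply: (@le_trans _ _ (w l x - 0)); last by rewrite subr0.
  by rewrite lerB //; apply: sumr_ge0.
have heq : forall w : 'I_m -> V -> R, (forall l p x, p != l -> 0 < w l x -> w p x = 0) ->
    forall x, 0 < w l x -> uhat w l x = w l x.
  move=> w dw x hx; rewrite /uhat big1 ?subr0 // => p hp; exact: (dw l p x hp hx).
split; apply/fintype.subsetP => x; rewrite !inE => hx.
  have hux : 0 < u l x by exact: le_lt_trans (gv l x) hx.
  by rewrite (heq u) //; apply: le_lt_trans (hle _ gv x) hx.
rewrite leNgt; apply/negP => hvu.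
have hvx : 0 < v l x by exact: le_lt_trans (gu l x) hvu.
move: hx; rewrite (heq v) // => hx.
by move: (lt_trans (le_lt_trans (hle _ gu x) hvu) hx); rewrite ltxx.
Qed.
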